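(* Let $X,Y$ be $\mathfrak{Q}$-preordered $\mathfrak{Q}$-subsets and $g\colon\mathsf{P}^{\dagger}Y\to\mathsf{P}^{\dagger}X$ a $\mathfrak{Q}$-order-preserving map. The following are equivalent: (i) $g$ is a right adjoint in $\mathfrak{Q}\text{-}\mathbf{FOrd}$, i.e. there is a $\mathfrak{Q}$-order-preserving $f\colon\mathsf{P}^{\dagger}X\to\mathsf{P}^{\dagger}Y$ with $f\dashv g$ (a dual $\mathfrak{Q}$-axiality from $X$ to $Y$); (ii) $g$ is a right adjoint between the underlying preordered sets of $\mathsf{P}^{\dagger}Y$ and $\mathsf{P}^{\dagger}X$, and $g(\lambda\circ v)=g\lambda\circ v$ for all $\lambda\in\mathsf{P}^{\dagger}Y$, $q\in\mathfrak{Q}$ and $v\in\mathcal{D}\mathfrak{Q}(q,|\lambda|)$; (iii) $g$ is a right adjoint between the underlying preordered sets of $\mathsf{P}^{\dagger}Y$ and $\mathsf{P}^{\dagger}X$, and $g(\mathsf{y}^{\dagger}_Y y\circ v)=g\mathsf{y}^{\dagger}_Y y\circ v$ for all $y\in Y$, $q\in\mathfrak{Q}$ and $v\in\mathcal{D}\mathfrak{Q}(q,|y|)$.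
   Context: $(\mathfrak{Q},\&,e)$ is a non-trivial unital quantale (complete lattice with associative multiplication with unit $e$ preserving joins in each variable, $\bot<e$), implications $p\& q\le r\iff p\le r/ q\iff q\le p\backslash r$, and $\mathcal{D}\mathfrak{Q}(p,q)=\{u\mid (u/ p)\& p=u=q\&(q\backslash u)\}$. A $\mathfrak{Q}$-subset is a set $X$ with $|\cdot|\colon X\to\mathfrak{Q}$; $\mathbf{1}_q$ is the singleton $\{*\}$ with $|*|=q$, and $v\in\mathcal{D}\mathfrak{Q}(p,q)$ is identified with the $\mathfrak{Q}$-relation from $\mathbf{1}_p$ to $\mathbf{1}_q$ with value $v$. A $\mathfrak{Q}$-relation from $X$ to $Y$ is a map $\phi\colon X\times Y\to\mathfrak{Q}$ with $\phi(x,y)\in\mathcal{D}\mathfrak{Q}(|x|,|y|)$, ordered pointwise; composition $(\psi\circ\phi)(x,z)=\bigvee_y(\psi(y,z)/|y|)\&\phi(x,y)$; $\xi\swarrow\phi$ is the largest $\psi'$ with $\psi'\circ\phi\le\xi$, and $\psi\searrow\xi$ the largest $\phi'$ with $\psi\circ\phi'\le\xi$. $\mathrm{id}_X(x,x)=|x|$, $\bot$ elsewhere. A $\mathfrak{Q}$-preordered $\mathfrak{Q}$-subset is a $\mathfrak{Q}$-subset $X$ with a $\mathfrak{Q}$-relation $1_X^{\natural}$ from $X$ to $X$ with $\mathrm{id}_X\le 1_X^{\natural}$ and $1_X^{\natural}\circ 1_X^{\natural}\le 1_X^{\natural}$; its underlying preorder is $x\le y\iff |x|=|y|$ and $|x|\le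 1_X^{\natural}(x,y)$. A $\mathfrak{Q}$-order-preserving map $f$ satisfies $|fx|=|x|$ and $1_X^{\natural}(x,x')\le 1_Y^{\natural}(fx,fx')$; $f\le g$ means $|x|\le 1_Y^{\natural}(fx,gx)$ for all $x$; $f\dashv g$ means $1_X\le gf$ and $fg\le 1_Y$; $\mathfrak{Q}\text{-}\mathbf{FOrd}$ is the category of $\mathfrak{Q}$-preordered $\mathfrak{Q}$-subsets and $\mathfrak{Q}$-order-preserving maps. The dual $\mathfrak{Q}$-powerset $\mathsf{P}^{\dagger}X$ consists of the potential upper $\mathfrak{Q}$-subsets, i.e. $\mathfrak{Q}$-relations $\lambda$ from some $\mathbf{1}_q$ to $X$ with $1_X^{\natural}\circ\lambda\le\lambda$, with $|\lambda|=q$ and $\mathfrak{Q}$-preorder $1_{\mathsf{P}^{\dagger}X}^{\natural}(\lambda,\lambda')=\lambda'\searrow\lambda$ (so its underlying order is the reverse of the pointwise order among elements of equal membership). The co-Yoneda embedding $\mathsf{y}^{\dagger}_X\colon X\to\mathsf{P}^{\dagger}X$ sends $x$ to $1_X^{\natural}(x,-)$, a $\mathfrak{Q}$-relation from $\mathbf{1}_{|x|}$ to $X$. *)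

(* Defs.v *)
Unset Implicit Arguments.
Unset Strict Implicit.

Record Quantale := {
  qc :> Type;
  qle : qc -> qc -> Prop;
  qsup : (qc -> Prop) -> qc;
  qmul : qc -> qc -> qc;
  qe : qc;
  qle_refl : forall x, qle x x;
  qle_trans : forall x y z, qle x y -> qle y z -> qle x z;
  qle_anti : forall x y, qle x y -> qle y x -> x = y;
  qsup_ub : forall (S : qc -> Prop) x, S x -> qle x (qsup S);
  qsup_least : forall (S : qc -> Prop) u, (forall x, S x -> qle x u) -> qle (qsup S) u;
  qmul_assoc : forall x y z, qmul (qmul x y) z = qmul x (qmul y z);
  qmul_e_l : forall x, qmul qe x = x;
  qmul_e_r : forall x, qmul x qe = x;
  qmul_sup_l : forall a (S : qc -> Prop),
      qmul a (qsup S) = qsup (fun y => exists x, S x /\ y = qmul a x);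
  qmul_sup_r : forall (S : qc -> Prop) a,
      qmul (qsup S) a = qsup (fun y => exists x, S x /\ y = qmul x a);
  q_nontriv : qsup (fun _ => False) <> qe
}.

Arguments qle {_}. Arguments qsup {_}. Arguments qmul {_}. Arguments qe {_}.

Section QuantaleDefs.
Variable Q : Quantale.

Definition qbot : Q := qsup (fun _ => False).

(** Implications: [p & q <= r <-> p <= r / q <-> q <= p \ r]. *)
Definition qrdiv (r q : Q) : Q := qsup (fun p => qle (qmul p q) r).
Definition qldiv (p r : Q) : Q := qsup (fun q => qle (qmul p q) r).

Definition inDQ (u p q : Q) : Prop :=
  qmul (qrdiv u p) p = u /\ u = qmul q (qldiv q u).

Record Qsubset := { qs_car :> Type; qs_mem : qs_car -> Q }.
Arguments qs_mem {_} _.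

Definition one_q (q : Q) : Qsubset := {| qs_car := unit; qs_mem := fun _ => q |}.

Definition is_Qrel (X Y : Qsubset) (phi : X -> Y -> Q) : Prop :=
  forall x y, inDQ (phi x y) (qs_mem x) (qs_mem y).

Definition rel_le (X Y : Qsubset) (phi psi : X -> Y -> Q) : Prop :=
  forall x y, qle (phi x y) (psi x y).

Definition comp (X Y Z : Qsubset) (psi : Y -> Z -> Q) (phi : X -> Y -> Q)
  : X -> Z -> Q :=
  fun x z => qsup (fun a => exists y : Y, a = qmul (qrdiv (psi y z) (qs_mem y)) (phi x y)).

(** id_X(x,x) = |x|, ⊥ elsewhere. *)
Definition id_rel (X : Qsubset) : X -> X -> Q :=
  fun x y => qsup (fun a => x = y /\ a = qs_mem x).

Definition rimp (X Y Z : Qsubset) (psi : Y -> Z -> Q) (xi : X -> Z -> Q)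
  : X -> Y -> Q :=
  fun x y => qsup (fun a => exists phi : X -> Y -> Q,
                     is_Qrel X Y phi /\ rel_le X Z (comp X Y Z psi phi) xi /\ a = phi x y).

Record QPOS := { qp_sub :> Qsubset; qp_one : qp_sub -> qp_sub -> Q }.
Arguments qp_one : clear implicits.

Definition is_QPreord (X : QPOS) : Prop :=
  is_Qrel X X (qp_one X) /\
  rel_le X X (id_rel X) (qp_one X) /\
  rel_le X X (comp X X X (qp_one X) (qp_one X)) (qp_one X).

Record PD (X : QPOS) := {
  pd_q : Q;
  pd_rel : qs_car (one_q pd_q) -> qs_car X -> Q;
  pd_isrel : is_Qrel (one_q pd_q) X pd_rel;
  pd_upper : rel_le (one_q pd_q) X (comp (one_q pd_q) X X (qp_one X) pd_rel) pd_rel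
}.
Arguments pd_q {X} _. Arguments pd_rel {X} _ _ _.

Definition PDual (X : QPOS) : QPOS :=
  {| qp_sub := {| qs_car := PD X; qs_mem := @pd_q X |};
     qp_one := fun l l' =>
       rimp (one_q (pd_q l)) (one_q (pd_q l')) X (pd_rel l') (pd_rel l) tt tt |}.

Definition ule {X : QPOS} (x y : X) : Prop :=
  qs_mem x = qs_mem y /\ qle (qs_mem x) (qp_one X x y).

Definition qmono (X Y : QPOS) (f : X -> Y) : Prop :=
  (forall x, qs_mem (f x) = qs_mem x) /\
  (forall x x', qle (qp_one X x x') (qp_one Y (f x) (f x'))).

Definition map_le (X Y : QPOS) (f g : X -> Y) : Prop :=
  forall x, qle (qs_mem x) (qp_one Y (f x) (g x)).

Definition qadj (X Y : QPOS) (f : X -> Y) (g : Y -> X) : Prop :=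
  map_le X X (fun x => x) (fun x => g (f x)) /\
  map_le Y Y (fun y => f (g y)) (fun y => y).

Definition preord_right_adjoint (X Y : QPOS) (g : Y -> X) : Prop :=
  exists f : X -> Y,
    (forall a b, ule a b -> ule (f a) (f b)) /\
    (forall a b, ule a b -> ule (g a) (g b)) /\
    (forall a, ule a (g (f a))) /\
    (forall b, ule (f (g b)) b).

Definition scal_comp (X : QPOS) (q : Q) (l : PD X) (v : Q)
  : qs_car (one_q q) -> qs_car X -> Q :=
  comp (one_q q) (one_q (pd_q l)) X (pd_rel l) (fun _ _ => v).

Definition pd_is (X : QPOS) (l : PD X) (q : Q) (r : unit -> qs_car X -> Q) : Prop :=
  pd_q l = q /\ forall u x, pd_rel l u x = r u x.

Definition yoneda_rel (Y : QPOS) (y : Y) : unit -> qs_car Y -> Q :=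
  fun _ y' => qp_one Y y y'.

End QuantaleDefs.

Arguments qs_mem {Q q} _. Arguments qp_one {Q} _ _ _.
Arguments pd_q {Q X} _. Arguments pd_rel {Q X} _ _ _.
Arguments one_q {Q} _. Arguments inDQ {Q} _ _ _.
Arguments qmono {Q} _ _ _. Arguments qadj {Q} _ _ _ _.
Arguments PDual {Q} _. Arguments preord_right_adjoint {Q} _ _ _.
Arguments scal_comp {Q X} _ _ _ _. Arguments pd_is {Q X} _ _ _.
Arguments yoneda_rel {Q Y} _ _ _.
Arguments is_QPreord {Q} _. Arguments PD {Q} _. Arguments ule {Q X} _ _.

(* Main.v *)
Require Import Defs.

Lemma qle_eq {Q : Quantale} (a b : Q) : a = b -> qle a b.
Proof. intros ->; apply qle_refl. Qed.

Lemma qmul_mono_r {Q : Quantale} (c a b : Q) : qle a b -> qle (qmul c a) (qmul c b).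
Proof.
  intros H.
  assert (Hb : b = qsup (fun x => x = a \/ x = b)).
  { apply qle_anti. apply qsup_ub; auto. apply qsup_least. intros x [->| ->]; auto using qle_refl. }
  rewrite Hb, qmul_sup_l. apply qsup_ub. exists a. split; auto.
Qed.

Lemma qmul_mono_l {Q : Quantale} (c a b : Q) : qle a b -> qle (qmul a c) (qmul b c).
Proof.
  intros H.
  assert (Hb : b = qsup (fun x => x = a \/ x = b)).
  { apply qle_anti. apply qsup_ub; auto. apply qsup_least. intros x [->| ->]; auto using qle_refl. }
  rewrite Hb, qmul_sup_r. apply qsup_ub. exists a. split; auto.
Qed.

Lemma rdiv_counit {Q : Quantale} (r q : Q) : qle (qmul (qrdiv Q r q) q) r.
Proof. unfold qrdiv. rewrite qmul_sup_r. apply qsup_least. intros y [x [Hx ->]]. exact Hx. Qed.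

Lemma ldiv_counit {Q : Quantale} (p r : Q) : qle (qmul p (qldiv Q p r)) r.
Proof. unfold qldiv. rewrite qmul_sup_l. apply qsup_least. intros y [x [Hx ->]]. exact Hx. Qed.

Lemma rdiv_adj {Q : Quantale} (p q r : Q) : qle (qmul p q) r <-> qle p (qrdiv Q r q).
Proof. split. intro H; unfold qrdiv; apply qsup_ub; exact H.
 intro H. eapply qle_trans. apply qmul_mono_l. exact H. apply rdiv_counit. Qed.

Lemma ldiv_adj {Q : Quantale} (p q r : Q) : qle (qmul p q) r <-> qle q (qldiv Q p r).
Proof. split. intro H; unfold qldiv; apply qsup_ub; exact H.
 intro H. eapply qle_trans. apply qmul_mono_r. exact H. apply ldiv_counit. Qed.

Lemma qmul_mono {Q : Quantale} (a b c d : Q) : qle a b -> qle c d -> qle (qmul a c) (qmul b d).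
Proof. intros H1 H2. eapply qle_trans; [apply qmul_mono_l; exact H1| apply qmul_mono_r; exact H2]. Qed.

Lemma rdiv_intro {Q : Quantale} (p q r : Q) : qle (qmul p q) r -> qle p (qrdiv Q r q).
Proof. apply rdiv_adj. Qed.
Lemma ldiv_intro {Q : Quantale} (p q r : Q) : qle (qmul p q) r -> qle q (qldiv Q p r).
Proof. apply ldiv_adj. Qed.

Lemma rdiv_mono {Q : Quantale} (a b p : Q) : qle a b -> qle (qrdiv Q a p) (qrdiv Q b p).
Proof. intro H. apply rdiv_intro. eapply qle_trans; [apply rdiv_counit | exact H]. Qed.

Lemma ldiv_mono {Q : Quantale} (a b p : Q) : qle a b -> qle (qldiv Q p a) (qldiv Q p b).
Proof. intro H. apply ldiv_intro. eapply qle_trans; [apply ldiv_counit | exact H]. Qed.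

Lemma inDQ_sup {Q : Quantale} (S : Q -> Prop) (p q : Q) :
  (forall u, S u -> inDQ u p q) -> inDQ (qsup S) p q.
Proof.
  intros H. split; apply qle_anti.
  - apply rdiv_counit.
  - apply qsup_least. intros u Hu. destruct (H u Hu) as [H1 _].
    eapply qle_trans; [apply qle_eq; symmetry; exact H1|].
    apply qmul_mono_l. apply rdiv_mono. apply qsup_ub; auto.
  - apply qsup_least. intros u Hu. destruct (H u Hu) as [_ H2].
    eapply qle_trans; [apply qle_eq; exact H2|].
    apply qmul_mono_r. apply ldiv_mono. apply qsup_ub; auto.
  - apply ldiv_counit.
Qed.

Lemma inDQ_refl {Q : Quantale} (p : Q) : inDQ p p p.
Proof.
  split; apply qle_anti.
  - apply rdiv_counit.
  - eapply qle_trans; [apply qle_eq; symmetry; apply qmul_e_l|].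
    apply qmul_mono_l. apply rdiv_intro. rewrite qmul_e_l. apply qle_refl.
  - eapply qle_trans; [apply qle_eq; symmetry; apply qmul_e_r|].
    apply qmul_mono_r. apply ldiv_intro. rewrite qmul_e_r. apply qle_refl.
  - apply ldiv_counit.
Qed.

Lemma inDQ_comp {Q : Quantale} (a v p q r : Q) :
  inDQ a p r -> inDQ v q p -> inDQ (qmul (qrdiv Q a p) v) q r.
Proof.
  intros [Ha1 Ha2] [Hv1 Hv2].
  assert (E : qmul (qrdiv Q a p) v = qmul a (qldiv Q p v)).
  { transitivity (qmul (qrdiv Q a p) (qmul p (qldiv Q p v))). f_equal; exact Hv2.
    rewrite <- qmul_assoc, Ha1. reflexivity. }
  split; apply qle_anti.
  - apply rdiv_counit.
  - eapply qle_trans with (qmul (qmul (qrdiv Q a p) (qrdiv Q v q)) q).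
    + rewrite qmul_assoc, Hv1. apply qle_refl.
    + apply qmul_mono_l. apply rdiv_intro. rewrite qmul_assoc, Hv1. apply qle_refl.
  - eapply qle_trans with (qmul r (qmul (qldiv Q r a) (qldiv Q p v))).
    + rewrite <- qmul_assoc, <- Ha2, E. apply qle_refl.
    + apply qmul_mono_r. apply ldiv_intro. rewrite <- qmul_assoc, <- Ha2, <- E. apply qle_refl.
  - apply ldiv_counit.
Qed.

Lemma comp_unit {Q : Quantale} (q p : Q) (X : Qsubset Q)
  (rho : qs_car _ (one_q p) -> qs_car _ X -> Q) (phi : qs_car _ (one_q q) -> qs_car _ (one_q p) -> Q) u x :
  comp Q (one_q q) (one_q p) X rho phi u x = qmul (qrdiv Q (rho tt x) p) (phi u tt).
Proof.
  apply qle_anti.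
  - apply qsup_least. intros a [y ->]. destruct y. apply qle_refl.
  - apply qsup_ub. exists tt. reflexivity.
Qed.

Lemma scal_comp_eq {Q : Quantale} {X : QPOS Q} (q : Q) (l : PD X) (v : Q) u x :
  scal_comp q l v u x = qmul (qrdiv Q (pd_rel l tt x) (pd_q l)) v.
Proof. unfold scal_comp. rewrite comp_unit. reflexivity. Qed.

Lemma isrel {Q : Quantale} {X : QPOS Q} (l : PD X) x :
  inDQ (pd_rel l tt x) (pd_q l) (qs_mem x).
Proof. exact (pd_isrel Q X l tt x). Qed.

Lemma rimp_ub {Q : Quantale} (X : QPOS Q) (l l' : PD X) (w : Q) :
  inDQ w (pd_q l) (pd_q l') ->
  (forall x, qle (qmul (qrdiv Q (pd_rel l' tt x) (pd_q l')) w) (pd_rel l tt x)) ->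
  qle w (qp_one (PDual X) l l').
Proof.
  intros Hw H.
  change (qle w (rimp Q (one_q (pd_q l)) (one_q (pd_q l')) X (pd_rel l') (pd_rel l) tt tt)).
  apply qsup_ub. exists (fun _ _ => w). split; [|split].
  - intros u u'. exact Hw.
  - intros u x. destruct u. rewrite comp_unit. apply H.
  - reflexivity.
Qed.

Lemma rimp_comp {Q : Quantale} (X : QPOS Q) (l l' : PD X) x :
  qle (qmul (qrdiv Q (pd_rel l' tt x) (pd_q l')) (qp_one (PDual X) l l')) (pd_rel l tt x).
Proof.
  change (qle (qmul (qrdiv Q (pd_rel l' tt x) (pd_q l'))
    (rimp Q (one_q (pd_q l)) (one_q (pd_q l')) X (pd_rel l') (pd_rel l) tt tt)) (pd_rel l tt x)).
  unfold rimp. rewrite qmul_sup_l. apply qsup_least.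
  intros y [a [[phi [Hphi [Hle ->]]] ->]].
  specialize (Hle tt x). rewrite comp_unit in Hle. exact Hle.
Qed.

Lemma rimp_DQ {Q : Quantale} (X : QPOS Q) (l l' : PD X) :
  inDQ (qp_one (PDual X) l l') (pd_q l) (pd_q l').
Proof.
  apply inDQ_sup. intros a [phi [Hphi [_ ->]]]. exact (Hphi tt tt).
Qed.

Lemma ule_PD {Q : Quantale} (X : QPOS Q) (l l' : PD X) :
  @ule Q (PDual X) l l' <-> pd_q l = pd_q l' /\ forall x, qle (pd_rel l' tt x) (pd_rel l tt x).
Proof.
  unfold ule; simpl.
  split.
  - intros [Hq H]. split; auto. intros x. destruct (isrel l' x) as [H1 _].
    eapply qle_trans; [apply qle_eq; symmetry; exact H1 |].
    assert (H' : qle (pd_q l') (qp_one (PDual X) l l')) by (rewrite <- Hq; exact H).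
    eapply qle_trans; [apply qmul_mono_r; exact H'|]. apply rimp_comp.
  - intros [Hq H]. split; auto. apply rimp_ub.
    + rewrite <- Hq. apply inDQ_refl.
    + intros x. rewrite Hq. destruct (isrel l' x) as [H1 _]. rewrite H1. apply H.
Qed.

Lemma qmono_ule {Q : Quantale} (X Y : QPOS Q) (F : X -> Y) :
  qmono X Y F -> forall a b, ule a b -> ule (F a) (F b).
Proof.
  intros [Hm Ho] a b [Hq Hl]. split.
  - rewrite !Hm; exact Hq.
  - rewrite Hm. eapply qle_trans; [exact Hl | apply Ho].
Qed.

Lemma compPD_isrel {Q : Quantale} {Y : QPOS Q} (l : PD Y) (q v : Q) (hv : inDQ v q (pd_q l)) :
  is_Qrel Q (one_q q) Y (scal_comp q l v).
Proof.
  intros u y. rewrite scal_comp_eq. apply inDQ_comp with (p := pd_q l).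
  - apply isrel.
  - exact hv.
Qed.

Lemma compPD_upper {Q : Quantale} {Y : QPOS Q} (l : PD Y) (q v : Q) :
  rel_le Q (one_q q) Y (comp Q (one_q q) Y Y (qp_one Y) (scal_comp q l v)) (scal_comp q l v).
Proof.
  intros u y'. unfold comp at 1. apply qsup_least. intros a [z ->].
  rewrite !scal_comp_eq. rewrite <- qmul_assoc. apply qmul_mono_l. apply rdiv_intro.
  rewrite qmul_assoc. destruct (isrel l z) as [H1 _]. rewrite H1.
  eapply qle_trans; [|apply (pd_upper _ _ l tt y')].
  unfold comp. apply qsup_ub. exists z. reflexivity.
Qed.

Definition compPD {Q : Quantale} {Y : QPOS Q} (l : PD Y) (q v : Q) (hv : inDQ v q (pd_q l)) : PD Y :=
  {| pd_q := q; pd_rel := scal_comp q l v; pd_isrel := compPD_isrel l q v hv;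
     pd_upper := compPD_upper l q v |}.

Definition yonedaPD {Q : Quantale} {Y : QPOS Q} (hY : is_QPreord Y) (y : Y) : PD Y :=
  {| pd_q := qs_mem y; pd_rel := yoneda_rel y;
     pd_isrel := fun u y' => proj1 hY y y';
     pd_upper := fun u y' => proj2 (proj2 hY) y y' |}.

Lemma supPD_isrel {Q : Quantale} {X : QPOS Q} (p : Q) (P : PD X -> Prop)
  (hP : forall l, P l -> pd_q l = p) :
  is_Qrel Q (one_q p) X (fun _ x => qsup (fun a => exists l, P l /\ a = pd_rel l tt x)).
Proof.
  intros u x. apply inDQ_sup. intros a [l [Hl ->]].
  pose proof (isrel l x) as H. rewrite (hP l Hl) in H. exact H.
Qed.

Lemma supPD_upper {Q : Quantale} {X : QPOS Q} (p : Q) (P : PD X -> Prop) :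
  let r := (fun (_ : qs_car _ (one_q p)) (x : qs_car _ X) => qsup (fun a => exists l, P l /\ a = pd_rel l tt x)) in
  rel_le Q (one_q p) X (comp Q (one_q p) X X (qp_one X) r) r.
Proof.
  intros r u x'. unfold comp at 1. apply qsup_least. intros a [z ->].
  unfold r. rewrite qmul_sup_l. apply qsup_least. intros b [c [[l [Hl ->]] ->]].
  eapply qle_trans; [|apply qsup_ub; exists l; split; [exact Hl|reflexivity]].
  eapply qle_trans; [|apply (pd_upper _ _ l tt x')].
  unfold comp; apply qsup_ub; exists z; reflexivity.
Qed.

Definition supPD {Q : Quantale} {X : QPOS Q} (p : Q) (P : PD X -> Prop)
  (hP : forall l, P l -> pd_q l = p) : PD X :=
  {| pd_q := p; pd_rel := fun _ x => qsup (fun a => exists l, P l /\ a = pd_rel l tt x);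
     pd_isrel := supPD_isrel p P hP; pd_upper := supPD_upper p P |}.

Lemma gmem {Q : Quantale} (X Y : QPOS Q) (g : PD Y -> PD X) (hg : qmono (PDual Y) (PDual X) g) l :
  pd_q (g l) = pd_q l.
Proof. exact (proj1 hg l). Qed.

Lemma g_comp_ge {Q : Quantale} (X Y : QPOS Q) (g : PD Y -> PD X) (hg : qmono (PDual Y) (PDual X) g)
  (l : PD Y) q v (hv : inDQ v q (pd_q l)) (mu : PD Y) (hmu : pd_is mu q (scal_comp q l v)) x :
  qle (scal_comp q (g l) v tt x) (pd_rel (g mu) tt x).
Proof.
  rewrite scal_comp_eq.
  assert (H1 : qle v (qp_one (PDual Y) mu l)).
  { apply rimp_ub.
    - rewrite (proj1 hmu). exact hv.
    - intros y. rewrite (proj2 hmu tt y), scal_comp_eq. apply qle_refl. }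
  assert (H2 : qle v (qp_one (PDual X) (g mu) (g l))).
  { eapply qle_trans; [exact H1| apply (proj2 hg)]. }
  eapply qle_trans; [|apply (rimp_comp _ (g mu) (g l) x)].
  apply qmul_mono_r. exact H2.
Qed.

Definition cond2 {Q : Quantale} (X Y : QPOS Q) (g : PD Y -> PD X) :=
  forall (l : PD Y) (q v : Q), inDQ v q (pd_q l) ->
       forall mu : PD Y, pd_is mu q (scal_comp q l v) ->
       pd_is (g mu) q (scal_comp q (g l) v).

Lemma step_i_ii {Q : Quantale} (X Y : QPOS Q) (g : PD Y -> PD X) (hg : qmono (PDual Y) (PDual X) g)
  (f : PD X -> PD Y) (hf : qmono (PDual X) (PDual Y) f) (hadj : qadj (PDual X) (PDual Y) f g) :
  preord_right_adjoint (PDual X) (PDual Y) g /\ cond2 X Y g.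
Proof.
  destruct hadj as [Hunit Hcounit].
  assert (fm : forall a, pd_q (f a) = pd_q a) by exact (proj1 hf).
  assert (gm : forall a, pd_q (g a) = pd_q a) by exact (proj1 hg).
  assert (Hu : forall a, @ule Q (PDual X) a (g (f a))).
  { intros a. split. simpl. rewrite gm, fm. reflexivity. apply Hunit. }
  assert (Hc : forall b, @ule Q (PDual Y) (f (g b)) b).
  { intros b. split. simpl. rewrite fm, gm. reflexivity.
    eapply qle_trans; [apply qle_eq | exact (Hcounit b)]. simpl. rewrite fm, gm. reflexivity. }
  split.
  - exists f. split; [apply qmono_ule; exact hf | split; [apply qmono_ule; exact hg | split; assumption]].
  - intros l q v hv mu hmu. split.
    { rewrite gm. exact (proj1 hmu). }
    intros u x; destruct u. apply qle_anti.
    + assert (hv' : inDQ v q (pd_q (g l))) by (rewrite gm; exact hv).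
      set (nu := compPD (g l) q v hv').
      assert (H1 : @ule Q (PDual Y) (f nu) mu).
      { apply ule_PD. split.
        - rewrite fm. simpl. symmetry. exact (proj1 hmu).
        - intros y. rewrite (proj2 hmu tt y), scal_comp_eq.
          destruct (proj1 (ule_PD _ _ _) (Hc l)) as [Hq Hl].
          assert (Hv1 : qle v (qp_one (PDual X) nu (g l))).
          { apply rimp_ub. exact hv'. intros z. simpl. rewrite scal_comp_eq. apply qle_refl. }
          assert (Hv2 : qle v (qp_one (PDual Y) (f nu) (f (g l)))).
          { eapply qle_trans; [exact Hv1|apply (proj2 hf)]. }
          eapply qle_trans; [|apply (rimp_comp _ (f nu) (f (g l)) y)].
          rewrite Hq. apply qmul_mono; [apply rdiv_mono; apply Hl | exact Hv2]. }
      pose proof (qmono_ule (PDual Y) (PDual X) g hg _ _ H1) as H2.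
      pose proof (Hu nu) as H3.
      apply ule_PD in H2. apply ule_PD in H3.
      eapply qle_trans; [apply (proj2 H2)|]. apply (proj2 H3).
    + eapply g_comp_ge; eauto.
Qed.

Lemma step_ii_i {Q : Quantale} (X Y : QPOS Q) (g : PD Y -> PD X) (hg : qmono (PDual Y) (PDual X) g)
  (Hadj : preord_right_adjoint (PDual X) (PDual Y) g) (H2 : cond2 X Y g) :
  exists f : PD X -> PD Y, qmono (PDual X) (PDual Y) f /\ qadj (PDual X) (PDual Y) f g.
Proof.
  destruct Hadj as [f [Hfm [Hgm [Hu Hc]]]].
  assert (gm : forall a, pd_q (g a) = pd_q a) by exact (proj1 hg).
  assert (fm : forall a, pd_q (f a) = pd_q a).
  { intros a. destruct (Hu a) as [E _]. simpl in E. rewrite E, gm. reflexivity. }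
  exists f. split; [split|split].
  - exact fm.
  - intros a b. set (w := qp_one (PDual X) a b).
    assert (hw : inDQ w (pd_q a) (pd_q b)) by apply rimp_DQ.
    assert (hw' : inDQ w (pd_q a) (pd_q (f b))) by (rewrite fm; exact hw).
    set (nu := compPD (f b) (pd_q a) w hw').
    assert (Hnu : pd_is (g nu) (pd_q a) (scal_comp (pd_q a) (g (f b)) w)).
    { apply H2. exact hw'. split; reflexivity. }
    assert (Ha : @ule Q (PDual X) a (g nu)).
    { apply ule_PD. split. symmetry; exact (proj1 Hnu).
      intros x. rewrite (proj2 Hnu tt x), scal_comp_eq.
      destruct (proj1 (ule_PD _ _ _) (Hu b)) as [Hq Hl].
      eapply qle_trans; [|apply (rimp_comp _ a b x)].
      rewrite <- Hq. apply qmul_mono_l. apply rdiv_mono. apply Hl. }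
    pose proof (Hfm _ _ Ha) as Hb. pose proof (Hc nu) as Hb'.
    apply ule_PD in Hb. apply ule_PD in Hb'.
    apply rimp_ub.
    + rewrite !fm. exact hw.
    + intros y. eapply qle_trans; [|apply (proj2 Hb)].
      eapply qle_trans; [|apply (proj2 Hb')]. simpl. rewrite scal_comp_eq. apply qle_refl.
  - intros a. exact (proj2 (Hu a)).
  - intros b. destruct (Hc b) as [E H]. eapply qle_trans; [apply qle_eq; symmetry; exact E|exact H].
Qed.

Lemma step_iii_ii {Q : Quantale} (X Y : QPOS Q) (hY : is_QPreord Y)
  (g : PD Y -> PD X) (hg : qmono (PDual Y) (PDual X) g)
  (Hadj : preord_right_adjoint (PDual X) (PDual Y) g)
  (H3 : forall (y : Y) (q v : Q), inDQ v q (qs_mem y) ->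
       forall eta mu : PD Y, pd_is eta (qs_mem y) (yoneda_rel y) ->
       pd_is mu q (scal_comp q eta v) ->
       pd_is (g mu) q (scal_comp q (g eta) v)) :
  cond2 X Y g.
Proof.
  destruct Hadj as [f [Hfm [Hgm [Hu Hc]]]].
  assert (gm : forall a, pd_q (g a) = pd_q a) by exact (proj1 hg).
  assert (fm : forall a, pd_q (f a) = pd_q a).
  { intros a. destruct (Hu a) as [E _]. simpl in E. rewrite E, gm. reflexivity. }
  intros l q v hv mu hmu. split.
  { rewrite gm. exact (proj1 hmu). }
  intros u x; destruct u. apply qle_anti; [| eapply g_comp_ge; eauto].
  set (p := pd_q l).
  set (eta := yonedaPD hY).
  assert (hu : forall y : Y, inDQ (qmul (qrdiv Q (pd_rel l tt y) p) v) q (pd_q (eta y))).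
  { intros y. apply inDQ_comp with (p := p). apply isrel. exact hv. }
  set (m := fun y => compPD (eta y) q _ (hu y)).
  assert (Hm : forall y, pd_is (g (m y)) q (scal_comp q (g (eta y)) (qmul (qrdiv Q (pd_rel l tt y) p) v))).
  { intros y. apply (H3 y). exact (hu y). split; reflexivity. split; reflexivity. }
  set (P := fun r => exists y, r = g (m y)).
  assert (hP : forall r, P r -> pd_q r = q).
  { intros r [y ->]. exact (proj1 (Hm y)). }
  set (rho := supPD q P hP).
  assert (Hrho : forall y, @ule Q (PDual X) rho (g (m y))).
  { intros y. apply ule_PD. split. symmetry. exact (proj1 (Hm y)).
    intros z. simpl. apply qsup_ub. exists (g (m y)). split; [exists y; reflexivity|reflexivity]. }
  assert (frm : pd_q (f rho) = q) by (rewrite fm; reflexivity).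
  assert (Hmu : @ule Q (PDual Y) (f rho) mu).
  { apply ule_PD. split. rewrite frm. symmetry; exact (proj1 hmu).
    intros y. rewrite (proj2 hmu tt y), scal_comp_eq.
    pose proof (Hfm _ _ (Hrho y)) as A1. pose proof (Hc (m y)) as A2.
    apply ule_PD in A1. apply ule_PD in A2.
    eapply qle_trans; [|apply (proj2 A1)]. eapply qle_trans; [|apply (proj2 A2)].
    simpl. rewrite scal_comp_eq.
    eapply qle_trans; [apply qle_eq; symmetry; apply qmul_e_l|].
    apply qmul_mono_l. apply rdiv_intro. rewrite qmul_e_l.
    simpl. eapply qle_trans; [|apply (proj1 (proj2 hY) y y)].
    apply qsup_ub. split; reflexivity. }
  pose proof (qmono_ule (PDual Y) (PDual X) g hg _ _ Hmu) as B1.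
  pose proof (Hu rho) as B2. apply ule_PD in B1. apply ule_PD in B2.
  eapply qle_trans; [apply (proj2 B1)|]. eapply qle_trans; [apply (proj2 B2)|].
  simpl. apply qsup_least. intros a [r [[y ->] ->]].
  rewrite (proj2 (Hm y) tt x), !scal_comp_eq.
  rewrite <- qmul_assoc. apply qmul_mono_l. apply rdiv_intro.
  rewrite (gm l). rewrite qmul_assoc. destruct (isrel l y) as [E _]. fold p in E. fold p. rewrite E.
  assert (Hl : qle (pd_rel l tt y) (qp_one (PDual Y) l (eta y))).
  { apply rimp_ub. apply isrel. intros y'. simpl.
    eapply qle_trans; [|apply (pd_upper _ _ l tt y')].
    unfold comp. apply qsup_ub. exists y. reflexivity. }
  assert (Hl' : qle (pd_rel l tt y) (qp_one (PDual X) (g l) (g (eta y)))).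
  { eapply qle_trans; [exact Hl|apply (proj2 hg)]. }
  eapply qle_trans; [|apply (rimp_comp _ (g l) (g (eta y)) x)].
  apply qmul_mono_r. exact Hl'.
Qed.

Theorem proposition4p16 (Q : Quantale) (X Y : QPOS Q)
  (hX : is_QPreord X) (hY : is_QPreord Y)
  (g : PD Y -> PD X) (hg : qmono (PDual Y) (PDual X) g) :
  let cond_i :=
    exists f : PD X -> PD Y, qmono (PDual X) (PDual Y) f /\ qadj (PDual X) (PDual Y) f g in
  let cond_ii :=
    preord_right_adjoint (PDual X) (PDual Y) g /\
    (forall (l : PD Y) (q v : Q), inDQ v q (pd_q l) ->
       forall mu : PD Y, pd_is mu q (scal_comp q l v) ->
       pd_is (g mu) q (scal_comp q (g l) v)) in
  let cond_iii :=
    preord_right_adjoint (PDual X) (PDual Y) g /\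
    (forall (y : Y) (q v : Q), inDQ v q (qs_mem y) ->
       forall eta mu : PD Y, pd_is eta (qs_mem y) (yoneda_rel y) ->
       pd_is mu q (scal_comp q eta v) ->
       pd_is (g mu) q (scal_comp q (g eta) v)) in
  (cond_i <-> cond_ii) /\ (cond_ii <-> cond_iii).
Proof.
  cbv zeta. split; split.
  - intros [f [hf ha]]. exact (step_i_ii X Y g hg f hf ha).
  - intros [Hadj H2]. exact (step_ii_i X Y g hg Hadj H2).
  - intros [Hadj H2]. split; [exact Hadj|].
    intros y q v hv eta mu heta hmu. apply (H2 eta q v); [rewrite (proj1 heta); exact hv| exact hmu].
  - intros [Hadj H3]. split; [exact Hadj|]. exact (step_iii_ii X Y hY g hg Hadj H3).
Qed.
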